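(* Let $X$ be a topological vector space, $Z$ a locally convex topological vector space, $C\subseteq Z$ a nonempty closed convex cone with $C^-\neq\{0\}$, $x_0\in X$, and $f:X\to\mathcal{F}(Z,C)$ convex-valued. Assume there is a set $B\subseteq Z^*$ with $\{tz^*\colon t\ge0,\ z^*\in B\}=C^-$ such that \[ \forall z\in Z:\ \sup_{z^*\in B}z^*(z)<\infty\qquad\text{and}\qquad\forall V\in\mathcal{V}(0):\ \inf_{z^*\in B}\sup_{z\in V}[-z^*(z)]>0, \] and such that the scalarizations are upper semicontinuous at $x_0$ uniformly with respect to $B$, i.e. for every $\varepsilon>0$ there is a neighborhood $U$ of $x_0$ such that for all $x\in U$ and all $z^*\in B$: $\varphi_{(f,z^* )}(x)<-1/\varepsilon$ if $\varphi_{(f,z^* )}(x_0)=-\infty$, and $\varphi_{(f,z^* )}(x)<\varphi_{(f,z^* )}(x_0)+\varepsilon$ otherwise. Then $f$ is lower continuous at $x_0$.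
   Context: $\mathcal{F}(Z,C)=\{A\subseteq Z\colon A=\operatorname{cl}(A+C)\}$ (empty set included); $C^-=\{z^*\in Z^*\colon z^*(z)\le0\ \forall z\in C\}$; $\mathcal{V}(0)$ is the system of neighborhoods of $0$ in $Z$. $\varphi_{(f,z^* )}(x)=\inf_{z\in f(x)}(-z^*(z))$, with $\inf\emptyset=+\infty$. $f$ is lower continuous at $x_0$ iff for every $z_0\in f(x_0)$ and every neighborhood $V$ of $z_0$ there is a neighborhood $U$ of $x_0$ with $f(x)\cap V\neq\emptyset$ for all $x\in U$. *)

(* Defs.v *)
From HB Require Import structures.
From mathcomp Require Import all_boot all_order all_algebra.
From mathcomp Require Import all_classical all_reals all_analysis.
Set Implicit Arguments. Unset Strict Implicit. Unset Printing Implicit Defensive.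
Import Order.TTheory GRing.Theory Num.Theory.
Local Open Scope classical_set_scope.
Local Open Scope ring_scope.

Section Defs.
Context (R : realType) (Z : tvsType R).

Definition dual_elt (g : Z -> R) : Prop :=
  linear (g : Z -> R^o) /\ continuous (g : Z -> R^o).

Definition is_cone (C : set Z) : Prop :=
  forall (t : R) z, 0 < t -> C z -> C (t *: z).
Definition closed_convex_cone (C : set Z) : Prop :=
  [/\ closed C, convex_set (C : set (convex_lmodType Z)) & is_cone C].

Definition neg_polar (C : set Z) : set (Z -> R) :=
  [set g | dual_elt g /\ forall z, C z -> g z <= 0].

Definition msum (A C : set Z) : set Z := [set a + c | a in A & c in C].

Definition in_FZC (C A : set Z) : Prop := A = closure (msum A C).

End Defs.

(* scalarization  phi_(f,z* )(x) = inf_{z in f x} (- z*(z)),  inf emptyset = +oo *)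
Definition scalarization (R : realType) (X : Type) (Z : tvsType R)
  (f : X -> set Z) (g : Z -> R) (x : X) : \bar R :=
  ereal_inf [set (- g z)%:E | z in f x].

Definition lower_continuous (R : realType) (X : topologicalType) (Z : tvsType R)
  (f : X -> set Z) (x0 : X) : Prop :=
  forall z0, f x0 z0 -> forall V : set Z, nbhs z0 V ->
    nbhs x0 (fun x => f x `&` V !=set0).

(* Main.v *)
Require Import Defs.
From HB Require Import structures.
From mathcomp Require Import all_boot all_order all_algebra.
From mathcomp Require Import all_classical all_reals all_analysis.
Import Order.TTheory GRing.Theory Num.Theory.
Local Open Scope classical_set_scope.
Local Open Scope ring_scope.
From mathcomp Require Import lra.
Section Pre.
Context (R : realType) (Z : tvsType R).
Lemma scale_pre (c : R) (z : Z) (S : set Z) :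
  nbhs (c *: z) S -> nbhs z [set y | S (c *: y)].
Proof.
move=> H; have := @scale_continuous R Z (c, z) S H; case=> -[A1 A2] /= [HA1 HA2] HA.
apply: filterS HA2 => y Ay /=; apply: (HA (c, y)); split => //=.
exact: nbhs_singleton HA1.
Qed.
Lemma scaleR_pre (c : R) (z : Z) (S : set Z) :
  nbhs (c *: z) S -> nbhs (c : R^o) [set s | S (s *: z)].
Proof.
move=> H; have := @scale_continuous R Z (c, z) S H; case=> -[A1 A2] /= [HA1 HA2] HA.
apply: filterS HA1 => y Ay /=; apply: (HA (y, z)); split => //=.
exact: nbhs_singleton HA2.
Qed.
Lemma add_pre (b z : Z) (S : set Z) :
  nbhs (z + b) S -> nbhs z [set y | S (y + b)].
Proof.
move=> H; have := @add_continuous Z (z, b) S H; case=> -[A1 A2] /= [HA1 HA2] HA.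
apply: filterS HA1 => y Ay /=; apply: (HA (y, b)); split => //=.
exact: nbhs_singleton HA2.
Qed.
End Pre.
Arguments scale_pre {R Z c z S}.
Arguments scaleR_pre {R Z c z S}.
Arguments add_pre {R Z b z S}.
Section Mink.
Context (R : realType) (Z : tvsType R).

Lemma convexP (A : set Z) : convex_set (A : set (convex_lmodType Z)) ->
  forall x y (l : R), 0 <= l -> l <= 1 -> A x -> A y -> A (l *: x + (1 - l) *: y).
Proof.
move=> cA x y l l0 l1 Ax Ay.
have := cA x y (Itv01 l0 l1) (mem_set Ax) (mem_set Ay).
by rewrite inE.
Qed.

Lemma convexI (A : set Z) : (forall x y (l : R), 0 <= l -> l <= 1 -> A x -> A y ->
  A (l *: x + (1 - l) *: y)) -> convex_set (A : set (convex_lmodType Z)).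
Proof.
move=> H x y l; rewrite !inE => Ax Ay.
exact: (H x y l%:num (ge0 l) (le1 l) Ax Ay).
Qed.

Variable K : set Z.
Hypothesis Kc : forall x y (l : R), 0 <= l -> l <= 1 -> K x -> K y ->
  K (l *: x + (1 - l) *: y).
Hypothesis Kn : nbhs (0 : Z) K.

Let K0 : K 0. Proof. exact: nbhs_singleton Kn. Qed.

Definition mset (z : Z) := [set t : R | 0 < t /\ K (t^-1 *: z)].
Definition gauge (z : Z) := inf (mset z).

Lemma mset_n0 z : mset z !=set0.
Proof.
have : nbhs (0 : R^o) [set s | K (s *: z)].
  by apply: scaleR_pre; rewrite scale0r.
case/nbhs_ballP => e /= e0 He.
have : K ((e/2) *: z).
  apply: He; rewrite /ball /= sub0r normrN ger0_norm ?divr_ge0 ?ltW//.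
  by rewrite ltr_pdivrMr// ltr_pMr// ltr1n.
by move=> H; exists (e/2)^-1; split; rewrite ?invr_gt0 ?divr_gt0// invrK.
Qed.

Lemma mset_lb z : has_lbound (mset z).
Proof. by exists 0 => t [/ltW]. Qed.

Lemma gauge_ge0 z : 0 <= gauge z.
Proof. by apply: lb_le_inf; [exact: mset_n0| move=> t [/ltW]]. Qed.

Lemma gauge_le1 z : K z -> gauge z <= 1.
Proof. by move=> Kz; apply: ge_inf; [exact: mset_lb|split; rewrite ?invr1 ?scale1r]. Qed.

Lemma gauge_lt1 z : gauge z < 1 -> K z.
Proof.
move=> H.
have [t [t0 Kt] t1] := @inf_adherent R (mset z) (1 - gauge z)
   ltac:(by rewrite subr_gt0) (conj (mset_n0 z) (mset_lb z)).
rewrite addrC subrK in t1.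
have := Kc _ _ _ (ltW t0) (ltW t1) Kt K0.
by rewrite scaler0 addr0 scalerA divff ?scale1r// gt_eqF.
Qed.

Lemma gauge_hom_le l z : 0 < l -> gauge (l *: z) <= l * gauge z.
Proof.
move=> l0; rewrite -ler_pdivrMl//; apply: lb_le_inf; first exact: mset_n0.
move=> t [t0 Kt]; rewrite ler_pdivrMl//; apply: ge_inf; first exact: mset_lb.
split; first by rewrite mulr_gt0.
by rewrite scalerA invfM mulrAC mulVf ?gt_eqF// mul1r.
Qed.

Lemma gauge_hom l z : 0 < l -> gauge (l *: z) = l * gauge z.
Proof.
move=> l0; apply/le_anti; rewrite gauge_hom_le//=.
have := @gauge_hom_le l^-1 (l *: z); rewrite invr_gt0 scalerA mulVf ?gt_eqF// scale1r.
by move=> /(_ l0); rewrite -ler_pdivlMl// invrK.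
Qed.

Lemma gauge_add x y : gauge (x + y) <= gauge x + gauge y.
Proof.
apply/ler_addgt0Pr => e e0.
have e20 : 0 < e / 2 by rewrite divr_gt0.
have [s [s0 Ks] hs] := @inf_adherent R (mset x) _ e20 (conj (mset_n0 x) (mset_lb x)).
have [t [t0 Kt] ht] := @inf_adherent R (mset y) _ e20 (conj (mset_n0 y) (mset_lb y)).
have st0 : 0 < s + t by rewrite addr_gt0.
apply: (@le_trans _ _ (s + t)); last first.
  rewrite [e in _ <= _ + e](splitr e) addrACA; apply: lerD; exact: ltW.
apply: ge_inf; first exact: mset_lb.
split => //.
have l0 : 0 <= s / (s + t) by rewrite divr_ge0 ?ltW.
have l1 : s / (s + t) <= 1 by rewrite ler_pdivrMr// mul1r lerDl ltW.
have := Kc _ _ _ l0 l1 Ks Kt.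
suff -> : (s + t)^-1 *: (x + y) = (s/(s+t)) *: (s^-1 *: x) + (1 - s/(s+t)) *: (t^-1 *: y) by [].
have -> : 1 - s / (s + t) = t / (s + t).
  by apply: (mulIf (lt0r_neq0 st0)); rewrite mulrBl mul1r !divfK ?gt_eqF// [s + t]addrC addrK.
rewrite !scalerA scalerDr; symmetry; congr (_ + _); congr (_ *: _).
  by rewrite mulrAC mulfV ?gt_eqF// mul1r.
by rewrite mulrAC mulfV ?gt_eqF// mul1r.
Qed.

End Mink.
Arguments gauge_lt1 {R Z K}.
Arguments gauge_le1 {R Z K}.
Arguments gauge_ge0 {R Z K}.
Arguments gauge_add {R Z K}.
Arguments gauge_hom {R Z K}.
Arguments gauge {R Z}. Arguments mset {R Z}.
Arguments convexP {R Z A}.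
Section HB.
Context (R : realType) (Z : tvsType R).
Variable p : Z -> R.
Hypothesis pge0 : forall z, 0 <= p z.
Hypothesis padd : forall x y, p (x + y) <= p x + p y.
Hypothesis phom : forall l z, 0 < l -> p (l *: z) = l * p z.
Variable x1 : Z.
Hypothesis px1 : 1 <= p x1.

Let p0 : p 0 = 0.
Proof. have h2 : (0:R) < 2 by lra.
by have := phom 2 0 h2; rewrite scaler0 => h; lra. Qed.

Let Pg (G : set (Z * R)) : Prop :=
  [/\ G (x1, 1),
   forall z r z' r', G (z, r) -> G (z', r') -> G (z + z', r + r'),
   forall l z r, G (z, r) -> G (l *: z, l * r) &
   forall z r, G (z, r) -> r <= p z].

Let func G : Pg G -> forall z r r', G (z, r) -> G (z, r') -> r = r'.
Proof.
case=> _ Gi Gs Gp z r r' Gr Gr'.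
have h1 := Gp _ _ (Gi _ _ _ _ Gr (Gs (-1) _ _ Gr')).
have h2 := Gp _ _ (Gi _ _ _ _ Gr' (Gs (-1) _ _ Gr)).
rewrite scaleN1r subrr p0 mulN1r in h1 h2; lra.
Qed.


Lemma hahn_banach : exists F : Z -> R, linear (F : Z -> R^o) /\
  (forall z, F z <= p z) /\ F x1 = 1.
Proof.
have zero_in G : Pg G -> G (0, 0).
  by case=> G1 _ Gs _; have := Gs 0 _ _ G1; rewrite scale0r mul0r.
have chainH : forall F : set (set (Z * R)),
    F `<=` (fun G => Pg G \/ G = set0) -> total_on F subset ->
    (fun G => Pg G \/ G = set0) (\bigcup_(X in F) X).
  move=> F FP tot.
  have hF X : F X -> X !=set0 -> Pg X.
    by move=> FX [u Xu]; case: (FP X FX) => // X0; rewrite X0 in Xu.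
  case: (pselect (exists X, F X /\ X !=set0)) => [[X0 [FX0 nX0]]|none].
    left; split.
    - by exists X0 => //; case: (hF X0 FX0 nX0).
    - move=> z r z' r' [X1 FX1 X1u] [X2 FX2 X2u].
      case: (tot X1 X2 FX1 FX2) => sub.
        exists X2 => //; case: (hF X2 FX2 (ex_intro _ _ X2u)) => _ Gi _ _.
        exact: Gi (sub _ X1u) X2u.
      exists X1 => //; case: (hF X1 FX1 (ex_intro _ _ X1u)) => _ Gi _ _.
      exact: Gi X1u (sub _ X2u).
    - move=> l z r [X1 FX1 X1u]; exists X1 => //.
      by case: (hF X1 FX1 (ex_intro _ _ X1u)) => _ _ Gs _; exact: Gs.
    - move=> z r [X1 FX1 X1u].
      by case: (hF X1 FX1 (ex_intro _ _ X1u)) => _ _ _ Gp; exact: Gp.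
  right; apply/seteqP; split => // u [X FX Xu].
  by exfalso; apply: none; exists X; split => //; exists u.
have [A [PA maxA]] := Zorn_bigcup chainH.
have {}PA : Pg A.
  case: PA => // A0; exfalso.
  pose G0 := [set u | exists l, u = (l *: x1, l)].
  apply: (maxA G0).
    split; first by rewrite A0.
    move=> /(_ (x1, 1)) h; have : A (x1, 1) by apply: h; exists 1; rewrite scale1r.
    by rewrite A0.
  left; split.
  - by exists 1; rewrite scale1r.
  - by move=> z r z' r' [l1 [-> ->]] [l2 [-> ->]]; exists (l1 + l2); rewrite scalerDl.
  - by move=> l z r [l1 [-> ->]]; exists (l * l1); rewrite scalerA.
  - move=> z r [l [-> ->]]; have [l0|l0] := ltP 0 l.
      by rewrite phom// ler_pMr.
    exact: le_trans l0 (pge0 _).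
case: PA => A1 Ai As Ap.
have PA : Pg A by [].
have tot : forall z, exists r, A (z, r).
  move=> y; case: (pselect (exists r, A (y, r))) => // nz; exfalso.
  pose S := [set s | exists m r, A (m, r) /\ s = r - p (m - y)].
  have Snz : S !=set0 by exists (0 - p (0 - y)); exists 0, 0; split => //; exact: zero_in.
  have Sub m2 r2 : A (m2, r2) -> ubound S (p (m2 + y) - r2).
    move=> Am2 s [m1 [r1 [Am1 ->]]].
    have h1 := Ap _ _ (Ai _ _ _ _ Am1 Am2).
    have h2 := padd (m1 - y) (m2 + y).
    have e : m1 - y + (m2 + y) = m1 + m2 by rewrite addrACA addNr addr0.
    rewrite e in h2; lra.
  pose c := sup S.
  have hc1 m r : A (m, r) -> r - p (m - y) <= c.
    move=> Amr; apply: ub_le_sup; last by exists m, r.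
    by exists (p (0 + y) - 0); apply: Sub; exact: zero_in.
  have hc2 m r : A (m, r) -> c <= p (m + y) - r.
    by move=> Amr; apply: ge_sup Snz (Sub _ _ Amr).
  pose A' := [set u | exists m r l, A (m, r) /\ u = (m + l *: y, r + l * c)].
  apply: (maxA A').
    split.
      move=> [m r] Amr; exists m, r, 0; split => //.
      by rewrite scale0r mul0r !addr0.
    move=> /(_ (y, c)) h; apply: nz; exists c; apply: h.
    by exists 0, 0, 1; split; [exact: zero_in|rewrite scale1r mul1r !add0r].
  left; split.
  - by exists x1, 1, 0; split => //; rewrite scale0r mul0r !addr0.
  - move=> z r z' r' [m1 [r1 [l1 [A1' [-> ->]]]]] [m2 [r2 [l2 [A2 [-> ->]]]]].
    exists (m1 + m2), (r1 + r2), (l1 + l2); split; first exact: Ai.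
    by congr pair; rewrite ?scalerDl ?mulrDl addrACA.
  - move=> l0 z r [m [r1 [l [Am [-> ->]]]]].
    exists (l0 *: m), (l0 * r1), (l0 * l); split; first exact: As.
    by rewrite scalerDr scalerA mulrDr mulrA.
  - move=> z r [m [r1 [l [Am [-> ->]]]]].
    have [l0|l0|<-] := ltgtP 0 l; last by rewrite scale0r mul0r !addr0; exact: Ap.
      have h := hc2 _ _ (As l^-1 _ _ Am).
      have e := phom l (l^-1 *: m + y) l0.
      rewrite scalerDr scalerA mulfV ?gt_eqF// scale1r in e.
      rewrite e.
      have := ler_wpM2l (ltW l0) h; rewrite mulrBr mulrA mulfV ?gt_eqF// mul1r.
      lra.
    have ml0 : 0 < - l by rewrite oppr_gt0.
    have h := hc1 _ _ (As (- l)^-1 _ _ Am).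
    have e := phom (- l) ((- l)^-1 *: m - y) ml0.
    rewrite scalerDr scalerA mulfV ?gt_eqF// scale1r scalerN scaleNr opprK in e.
    rewrite e.
    have := ler_wpM2l (ltW ml0) h; rewrite mulrBr mulrA mulfV ?gt_eqF// mul1r.
    lra.
pose F z := sval (cid (tot z)).
have FA z : A (z, F z) by rewrite /F; case: cid.
exists F; split; last split.
- move=> a u v.
  have h := (func A PA _ _ _ (FA (a *: u + v)) (Ai _ _ _ _ (As a _ _ (FA u)) (FA v))).
  exact h.
- by move=> z; exact: Ap.
- exact: (func A PA _ _ _ (FA _) A1).
Qed.
End HB.
Arguments hahn_banach {R Z p}.
Section Sep.
Context (R : realType) (Z : tvsType R).

Section Lin.
Variable F : Z -> R.
Hypothesis lin : linear (F : Z -> R^o).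
Lemma lin0 : F 0 = 0.
Proof. have := lin 1 0 0; rewrite scaler0 addr0 scale1r => h.
by move: h; rewrite -{1}[F 0]addr0 => /addrI <-. Qed.
Lemma linD u v : F (u + v) = F u + F v.
Proof. by have := lin 1 u v; rewrite scale1r => ->; rewrite /GRing.scale/= mul1r. Qed.
Lemma linZ a u : F (a *: u) = a * F u.
Proof. by have := lin a u 0; rewrite !addr0 lin0 addr0. Qed.
Lemma linN u : F (- u) = - F u.
Proof. by rewrite -scaleN1r linZ mulN1r. Qed.
Lemma linB u v : F (u - v) = F u - F v.
Proof. by rewrite linD linN. Qed.
End Lin.

Lemma conv_aff (l : R) (a1 a2 o1 o2 x : Z) :
  l *: (a1 - o1 + x) + (1 - l) *: (a2 - o2 + x) =
  (l *: a1 + (1 - l) *: a2) - (l *: o1 + (1 - l) *: o2) + x.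
Proof.
rewrite [x in RHS](_ : x = l *: x + (1 - l) *: x); last first.
  by rewrite -scalerDl addrC subrK scale1r.
by rewrite !scalerDr !scalerN opprD addrACA (addrACA (l *: a1)).
Qed.

Lemma separation (A O : set Z) (a0 o0 : Z) :
  (forall x y (l : R), 0 <= l -> l <= 1 -> A x -> A y -> A (l *: x + (1 - l) *: y)) ->
  (forall x y (l : R), 0 <= l -> l <= 1 -> O x -> O y -> O (l *: x + (1 - l) *: y)) ->
  A a0 -> open O -> O o0 -> (forall z, A z -> O z -> False) ->
  exists F : Z -> R, [/\ linear (F : Z -> R^o), continuous (F : Z -> R^o),
    F (o0 - a0) = 1 & forall a o, A a -> O o -> F a <= F o].
Proof.
move=> Ac Oc Aa0 Oo Oo0 disj.
pose x1 := o0 - a0.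
pose K := [set k | exists a o, [/\ A a, O o & k = a - o + x1]].
have Kc x y (l : R) : 0 <= l -> l <= 1 -> K x -> K y -> K (l *: x + (1 - l) *: y).
  move=> l0 l1 [b1 [q1 [Hb1 Hq1 ->]]] [b2 [q2 [Hb2 Hq2 ->]]].
  exists (l *: b1 + (1 - l) *: b2), (l *: q1 + (1 - l) *: q2); split.
  - exact: Ac.
  - exact: Oc.
  - exact: conv_aff.
have Kn : nbhs (0 : Z) K.
  have h : nbhs ((-1) *: (0 : Z) + o0) O.
    by rewrite scaler0 add0r; apply: open_nbhs_nbhs; split.
  have h2 := scale_pre (add_pre h).
  apply: filterS h2 => k /= Ok; exists a0, ((-1) *: k + o0); split => //.
  by rewrite /x1 scaleN1r opprD opprK addrAC [a0 + _]addrC subrK addrC subrK.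
have Kx1 : ~ K x1.
  move=> [u [w [Aa Oo' e]]]; apply: (disj u) => //.
  have : u - w + x1 = 0 + x1 by rewrite add0r -e.
  move/addIr/eqP; rewrite subr_eq0 => /eqP ->.
  exact: Oo'.
have px1 : 1 <= gauge K x1.
  by rewrite leNgt; apply/negP => /(gauge_lt1 Kc Kn).
have [F [linF [Fp F1]]] := hahn_banach (gauge_ge0 Kn) (gauge_add Kc Kn)
   (gauge_hom Kn) x1 px1.
have FK k : K k -> F k <= 1.
  by move=> Kk; apply: le_trans (Fp k) (gauge_le1 _ Kk).
exists F; split => //.
- move=> z; apply/cvgrPdist_lt => e e0.
  pose d := e / 2.
  have d0 : 0 < d by rewrite divr_gt0.
  have hN : nbhs (0 : Z) [set k | K k /\ K (- k)].
    apply: filterI => //.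
    have h : nbhs ((-1) *: (0 : Z)) K by rewrite scaler0.
    by apply: filterS (scale_pre h) => k /=; rewrite scaleN1r.
  have h1 : nbhs (d^-1 *: (z + - z)) [set k | K k /\ K (- k)] by rewrite subrr scaler0.
  have h2 := add_pre (scale_pre h1).
  apply: filterS h2 => y /= [Ky Kny].
  have := FK _ Ky; have := FK _ Kny.
  rewrite linN // !linZ // linB // => h3 h4.
  have hd : `|F y - F z| <= d.
    have hw : F y - F z = d * (d^-1 * (F y - F z)).
      by rewrite mulrA mulfV ?gt_eqF // mul1r.
    rewrite hw normrM gtr0_norm // ger_pMr // ler_norml; apply/andP; split; lra.
  by rewrite distrC; apply: le_lt_trans hd _; rewrite /d ltr_pdivrMr// ltr_pMr// ltr1n.
- move=> u w Aa Oo'.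
  have : K (u - w + x1) by exists u, w.
  move/FK; rewrite linD // linB // F1; lra.
Qed.
End Sep.
Arguments separation {R Z A O a0 o0}. Arguments linD {R Z F}. Arguments linB {R Z F}. Arguments linZ {R Z F}. Arguments linN {R Z F}.
Theorem mainTheorem16 (R : realType) (X : topologicalLmodType R) (Z : tvsType R)
  (C : set Z) (x0 : X) (f : X -> set Z) (B : set (Z -> R)) :
  C !=set0 ->
  closed_convex_cone C ->
  neg_polar C <> [set (fun _ : Z => 0 : R)] ->
  (forall x, in_FZC C (f x)) ->
  (forall x, convex_set (f x : set (convex_lmodType Z))) ->
  [set (fun z => t * g z) | t in [set t : R | 0 <= t] & g in B] = neg_polar C ->
  (forall z : Z, (ereal_sup [set (g z)%:E | g in B] < +oo)%E) ->
  (forall V : set Z, nbhs (0 : Z) V ->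
     (0 < ereal_inf [set ereal_sup [set (- g z)%:E | z in V] | g in B])%E) ->
  (forall eps : R, 0 < eps ->
     exists U : set X, nbhs x0 U /\
       forall x, U x -> forall g, B g ->
         (scalarization f g x0 = -oo%E ->
            (scalarization f g x < (- eps^-1)%:E)%E) /\
         (scalarization f g x0 <> -oo%E ->
            (scalarization f g x < scalarization f g x0 + eps%:E)%E)) ->
  lower_continuous f x0.
Proof.
move=> Cn0 [Ccl Ccvx Ccone] Cpol fF fcvx Bgen Bsup Binf Husc.
move=> z0 fz0 V Vz0.
have Bpol g : B g -> neg_polar C g.
  move=> Bg; rewrite -Bgen; exists 1; first by rewrite /= ler01.
  exists g; first exact: Bg.
  by apply: funext => z; rewrite mul1r.
have [g0 Bg0] : exists g, B g.
  apply: contrapT => nB; apply: Cpol; apply/seteqP; split.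
    move=> h; rewrite -Bgen => -[t _ [g Bg _]]; exfalso; apply: nB; by exists g.
  move=> h -> /=; split; last by move=> z _; rewrite lexx.
  split; last exact: cst_continuous.
  by move=> a u v /=; rewrite scaler0 addr0.
have [qB qBcvx [qBopen qBbasis]] := @locally_convex R Z.
have [Ob [BOb Oz0] OV] := qBbasis z0 V Vz0.
have Oop : open Ob := qBopen Ob BOb.
have Ocvx := qBcvx Ob (mem_set BOb).
pose W := [set w | Ob (w + z0)].
have hW : nbhs (0 : Z) W.
  have h : nbhs (0 + z0) Ob by rewrite add0r; apply: open_nbhs_nbhs; split.
  exact: add_pre h.
have d_ex : exists2 d : R, 0 < d &
   (d%:E <= ereal_inf [set ereal_sup [set (- g z)%:E | z in W] | g in B])%E.
  move: (Binf W hW).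
  case: (ereal_inf _) => [r||] //.
    by rewrite lte_fin => r0; exists r.
  by move=> _; exists 1 => //; rewrite leey.
have [d d0 hd] := d_ex.
have M_ex : exists M : R, forall g, B g -> g z0 <= M.
  move: (Bsup z0) (@ereal_sup_ubound R [set (g z0)%:E | g in B]).
  case: (ereal_sup _) => [r||] //.
    by move=> _ ub; exists r => g Bg; rewrite -lee_fin; apply: ub; exists g.
  move=> _ ub; exists 0 => g Bg; exfalso.
  by have := ub (g z0)%:E (ex_intro2 _ _ g Bg erefl); rewrite leNgt ltNye.
have [M hM] := M_ex.
have dV0 : 0 < d^-1 by rewrite invr_gt0.
have Mn := normr_ge0 M.
have Mle := ler_norm M.
pose eps := (d^-1 + `|M|)^-1.
have eps0 : 0 < eps by rewrite invr_gt0; lra.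
have einv : eps^-1 = d^-1 + `|M| by rewrite invrK.
have epsd : eps <= d.
  rewrite /eps -[X in X <= _]mul1r ler_pdivrMr; last by lra.
  rewrite mulrDr mulfV ?gt_eqF//.
  have := mulr_ge0 (ltW d0) (normr_ge0 M); lra.
have [U [hU HU]] := Husc eps eps0.
apply: filterS hU => x Ux.
apply: contrapT => hne.
have disj z : f x z -> Ob z -> False.
  by move=> fz Oz; apply: hne; exists z; split => //; exact: OV.
case: (pselect (exists a, f x a)) => [[a0 fa0]|fxe]; last first.
  have [H1 H2] := HU x Ux g0 Bg0.
  have e : scalarization f g0 x = +oo%E.
    rewrite /scalarization.
    have -> : [set (- g0 z)%:E | z in f x] = set0.
      by apply/seteqP; split => // u [z fz _]; apply: fxe; exists z.
    exact: ereal_inf0.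
  case: (eqVneq (scalarization f g0 x0) -oo%E) => [/H1|/eqP/H2]; rewrite e.
    by rewrite ltNge leey.
  by rewrite ltNge leey.
have [F [linF contF F1 sepF]] := separation (convexP (fcvx x)) (convexP Ocvx)
  fa0 Oop Oz0 disj.
have FC c : C c -> F c <= 0.
  move=> Cc; rewrite leNgt; apply/negP => Fc0.
  have t0 : 0 < 2 / F c by rewrite divr_gt0.
  have fxt : f x (a0 + (2 / F c) *: c).
    rewrite (fF x); apply: subset_closure; exists a0 => //; exists ((2 / F c) *: c) => //.
    exact: Ccone.
  have := sepF _ _ fxt Oz0.
  rewrite linD // linZ // mulrAC -mulrA mulfV ?gt_eqF// mulr1.
  have := linB linF z0 a0; rewrite F1; lra.
have : neg_polar C F by split => //; split.
rewrite -Bgen => -[t /= t0 [g Bg eFg]].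
have tg z : F z = t * g z by rewrite -eFg.
have tpos : 0 < t.
  rewrite lt_neqAle t0 andbT; apply/eqP => t00.
  by move: F1; rewrite tg -t00 mul0r => /eqP; rewrite eq_sym oner_eq0.
have [[ling _] _] := Bpol g Bg.
have sepg a o : f x a -> Ob o -> g a <= g o.
  by move=> fa Oo; have := sepF _ _ fa Oo; rewrite !tg ler_pM2l.
have key a : f x a -> d <= g z0 - g a.
  move=> fa; rewrite -lee_fin; apply: le_trans hd _.
  apply: (@le_trans _ _ (ereal_sup [set (- g z)%:E | z in W])).
    by apply: ereal_inf_lbound; exists g.
  apply: ge_ereal_sup => _ [w Ww <-]; rewrite lee_fin.
  have := sepg _ _ fa Ww; rewrite linD //; lra.
have phix : ((- g z0 + d)%:E <= scalarization f g x)%E.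
  apply: le_ereal_inf_tmp => _ [a fa <-]; rewrite lee_fin.
  have := key a fa; lra.
have phix0 : (scalarization f g x0 <= (- g z0)%:E)%E.
  by apply: ge_ereal_inf; exists (- g z0)%:E => //; exists z0.
have gM := hM g Bg.
have [H1 H2] := HU x Ux g Bg.
case: (eqVneq (scalarization f g x0) -oo%E) => [/H1 h|/eqP/H2 h].
  have := le_lt_trans phix h; rewrite lte_fin einv; lra.
move: phix0 h; case: (scalarization f g x0) => [r||].
- rewrite lee_fin => hr h.
  have := le_lt_trans phix h; rewrite -EFinD lte_fin; lra.
- by rewrite leNgt ltey.
- by move=> _; rewrite /= ltNge leNye.
Qed.
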